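(* Let $T$ be a complete theory and $R(x,y)$ a binary relation (formula) of $T$. Suppose that for some $0<\delta<1$ and for all $\epsilon$ with $0<\epsilon<1$ and all $n\in\mathbb{N}$ there is a finite bipartite $R$-graph $(X,Y)$ with $|X|=|Y|\geq n$ which is $\epsilon$-regular with density $d$, where $|d-\delta|<\epsilon$. Then $R$ has the order property.
   Context: Work in a sufficiently saturated model of $T$. A finite bipartite $R$-graph $(X,Y)$ consists of disjoint finite sets $X,Y$ of tuples of the appropriate lengths, with an edge between $x\in X$ and $y\in Y$ iff $R(x,y)$. Its density is $e(X,Y)/|X||Y|$ where $e(X,Y)$ is the number of edges. $(X,Y)$ is $\epsilon$-regular if for all $X'\subseteq X$, $Y'\subseteq Y$ with $|X'|\ge\epsilon|X|$, $|Y'|\ge\epsilon|Y|$, the densities of $(X,Y)$ and $(X',Y')$ differ by less than $\epsilon$. $R$ has the order property if there are $\langle a_i,b_i:i<\omega\rangle$ with $R(a_i,b_j)$ iff $i<j$. *)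

(* Defs.v *)
From Stdlib Require Import Reals ClassicalDescription.
From mathcomp Require Import all_boot.
Set Implicit Arguments.
Unset Strict Implicit.
Unset Printing Implicit Defensive.

Record signature := Signature {
  fsym : Type; farity : fsym -> nat;
  rsym : Type; rarity : rsym -> nat }.

Section FOL.
Variable L : signature.

Inductive term : Type :=
| tvar : nat -> term
| tapp : forall f : fsym L, ('I_(farity f) -> term) -> term.

Inductive formula : Type :=
| fequal : term -> term -> formula
| frel : forall r : rsym L, ('I_(rarity r) -> term) -> formula
| fneg : formula -> formula
| fand : formula -> formula -> formula
| fex : nat -> formula -> formula.

Fixpoint occurs (v : nat) (t : term) : Prop :=
  match t with
  | tvar w => v = w
  | tapp f ts => exists i, occurs v (ts i)
  end.

Fixpoint free_in (v : nat) (phi : formula) : Prop :=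
  match phi with
  | fequal t1 t2 => occurs v t1 \/ occurs v t2
  | frel r ts => exists i, occurs v (ts i)
  | fneg psi => free_in v psi
  | fand psi chi => free_in v psi \/ free_in v chi
  | fex x psi => v <> x /\ free_in v psi
  end.

Definition sentence (phi : formula) : Prop := forall v, ~ free_in v phi.

Record structure := Structure {
  carrier :> Type;
  point : carrier;
  ifun : forall f : fsym L, ('I_(farity f) -> carrier) -> carrier;
  irel : forall r : rsym L, ('I_(rarity r) -> carrier) -> Prop }.

Fixpoint eval (M : structure) (e : nat -> M) (t : term) : M :=
  match t with
  | tvar v => e v
  | tapp f ts => ifun (fun i => eval e (ts i))
  end.

Definition upd (M : structure) (e : nat -> M) (x : nat) (a : M) : nat -> M :=
  fun v => if v == x then a else e v.

Fixpoint sat (M : structure) (e : nat -> M) (phi : formula) : Prop :=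
  match phi with
  | fequal t1 t2 => eval e t1 = eval e t2
  | frel r ts => irel (fun i => eval e (ts i))
  | fneg psi => ~ sat e psi
  | fand psi chi => sat e psi /\ sat e chi
  | fex x psi => exists a : M, sat (upd e x a) psi
  end.

Definition theory := formula -> Prop.

Definition models (M : structure) (T : theory) : Prop :=
  forall phi, T phi -> forall e : nat -> M, sat e phi.

Definition complete_theory (T : theory) : Prop :=
  (forall phi, T phi -> sentence phi) /\
  (exists M : structure, models M T) /\
  (forall phi, sentence phi ->
     (forall M : structure, models M T -> forall e : nat -> M, sat e phi) \/
     (forall M : structure, models M T -> forall e : nat -> M, ~ sat e phi)).

(** omega-saturation: every finitely satisfiable set of formulas in the
    variable 0 with finitely many parameters (assigned to variables 1..n)
    is realized. *)
Definition omega_saturated (M : structure) : Prop :=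
  forall (n : nat) (params : nat -> M) (p : formula -> Prop),
    (forall phi, p phi -> forall v, free_in v phi -> (v <= n)%N) ->
    (forall ls : seq formula, (forall phi, List.In phi ls -> p phi) ->
       exists a : M, forall phi, List.In phi ls -> sat (upd params 0 a) phi) ->
    exists a : M, forall phi, p phi -> sat (upd params 0 a) phi.

End FOL.

(** * The relation R(x,y) given by a formula whose free variables are among
    0..k+l-1; x is the tuple of variables 0..k-1, y the tuple k..k+l-1. *)

Section Graphs.
Variables (L : signature) (M : structure L) (phi : formula L) (k l : nat).

Definition fv_bounded : Prop := forall v, free_in v phi -> (v < k + l)%N.

Definition Rrel (a b : seq M) : Prop :=
  sat (fun v => nth (point M) (a ++ b) v) phi.

Definition Rb (a b : seq M) : bool :=
  if excluded_middle_informative (Rrel a b) then true else false.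

(** A finite bipartite R-graph (X,Y): X, Y are finite sets of tuples
    (given by injective enumerations) of lengths k and l, disjoint. *)
Definition bipartite_Rgraph (mX mY : nat) (X : 'I_mX -> seq M) (Y : 'I_mY -> seq M) : Prop :=
  (forall i, size (X i) = k) /\ (forall j, size (Y j) = l) /\
  injective X /\ injective Y /\ (forall i j, X i <> Y j).

Definition edges (mX mY : nat) (X : 'I_mX -> seq M) (Y : 'I_mY -> seq M)
  (A : {set 'I_mX}) (B : {set 'I_mY}) : nat :=
  #|[set p : 'I_mX * 'I_mY | [&& p.1 \in A, p.2 \in B & Rb (X p.1) (Y p.2)]]|.

Definition density (mX mY : nat) (X : 'I_mX -> seq M) (Y : 'I_mY -> seq M)
  (A : {set 'I_mX}) (B : {set 'I_mY}) : R :=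
  Rdiv (INR (edges X Y A B)) (Rmult (INR #|A|) (INR #|B|)).

Definition eps_regular (eps : R) (mX mY : nat) (X : 'I_mX -> seq M) (Y : 'I_mY -> seq M) : Prop :=
  forall (A : {set 'I_mX}) (B : {set 'I_mY}),
    Rle (Rmult eps (INR mX)) (INR #|A|) -> Rle (Rmult eps (INR mY)) (INR #|B|) ->
    Rlt (Rabs (Rminus (density X Y A B) (density X Y setT setT))) eps.

Definition order_property : Prop :=
  exists a b : nat -> seq M,
    (forall i, size (a i) = k) /\ (forall j, size (b j) = l) /\
    (forall i j, Rrel (a i) (b j) <-> (i < j)%N).

End Graphs.

(* Main.v *)
Require Import Defs.
From Stdlib Require Import Reals Lra ClassicalEpsilon FunctionalExtensionality.
From Stdlib Require Import Lia.
From mathcomp Require Import all_boot zify.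
Set Implicit Arguments.
Unset Strict Implicit.
Unset Printing Implicit Defensive.

Section Syn.
Variable L : signature.

Fixpoint tren (s : nat -> nat) (t : term L) : term L :=
  match t with
  | tvar v => tvar L (s v)
  | @tapp _ f ts => @tapp L f (fun i => tren s (ts i))
  end.

Fixpoint ren (s : nat -> nat) (p : formula L) : formula L :=
  match p with
  | fequal t1 t2 => fequal (tren s t1) (tren s t2)
  | @Defs.frel _ r ts => @Defs.frel L r (fun i => tren s (ts i))
  | fneg q => fneg (ren s q)
  | fand q1 q2 => fand (ren s q1) (ren s q2)
  | fex x q => fex (s x) (ren s q)
  end.

Variable M : structure L.

Fixpoint eval_tren (s : nat -> nat) (e : nat -> M) (t : term L) {struct t} :
  eval e (tren s t) = eval (fun v => e (s v)) t :=
  match t with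
  | tvar v => erefl
  | @tapp _ f ts => f_equal (@ifun L M f)
      (functional_extensionality _ _ (fun i => @eval_tren s e (ts i)))
  end.

Fixpoint eval_free (e1 e2 : nat -> M) (t : term L) {struct t} :
  (forall v, occurs v t -> e1 v = e2 v) -> eval e1 t = eval e2 t :=
  match t return (forall v, occurs v t -> e1 v = e2 v) -> eval e1 t = eval e2 t with
  | tvar v => fun H => H v erefl
  | @tapp _ f ts => fun H => f_equal (@ifun L M f)
      (functional_extensionality _ _ (fun i => @eval_free e1 e2 (ts i)
         (fun v Hv => H v (ex_intro _ i Hv))))
  end.

Fixpoint occurs_tren (s : nat -> nat) (v : nat) (t : term L) {struct t} :
  occurs v (tren s t) -> exists u, v = s u /\ occurs u t :=
  match t return occurs v (tren s t) -> exists u, v = s u /\ occurs u t with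
  | tvar w => fun H => ex_intro _ w (conj H erefl)
  | @tapp _ f ts => fun H =>
      match H with ex_intro i Hi =>
        match @occurs_tren s v (ts i) Hi with
        | ex_intro u (conj h1 h2) => ex_intro _ u (conj h1 (ex_intro _ i h2))
        end
      end
  end.

Lemma sat_free (p : formula L) : forall e1 e2 : nat -> M,
  (forall v, free_in v p -> e1 v = e2 v) -> (sat e1 p <-> sat e2 p).
Proof.
elim: p => [t1 t2|r ts|q IH|q1 IH1 q2 IH2|x q IH] e1 e2 H /=.
- rewrite (eval_free (e2:=e2) (t:=t1)); last by move=> v Hv; apply: H; left.
  rewrite (eval_free (e2:=e2) (t:=t2)); last by move=> v Hv; apply: H; right.
  done.
- have -> : (fun i => eval e1 (ts i)) = (fun i => eval e2 (ts i)).
    apply: functional_extensionality => i; apply: eval_free => v Hv; apply: H; by exists i.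
  done.
- by rewrite (IH e1 e2 H).
- by rewrite (IH1 e1 e2) ?(IH2 e1 e2) // => v Hv; apply: H; [right|left].
- have E : forall a, sat (upd e1 x a) q <-> sat (upd e2 x a) q.
    move=> a; apply: IH => v Hv; rewrite /upd; case: eqP => // hv.
    by apply: H; split.
  by split=> -[a Ha]; exists a; apply/E.
Qed.

Lemma sat_ext (p : formula L) (e1 e2 : nat -> M) :
  (forall v, e1 v = e2 v) -> sat e1 p -> sat e2 p.
Proof. by move=> H; case: (@sat_free p e1 e2 (fun v _ => H v)). Qed.

Lemma sat_ren (s : nat -> nat) (p : formula L) : injective s -> forall e : nat -> M,
  sat e (ren s p) <-> sat (fun v => e (s v)) p.
Proof.
move=> si; elim: p => [t1 t2|r ts|q IH|q1 IH1 q2 IH2|x q IH] e /=.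
- by rewrite !eval_tren.
- have -> : (fun i => eval e (tren s (ts i))) = (fun i => eval (fun v => e (s v)) (ts i)).
    by apply: functional_extensionality => i; rewrite eval_tren.
  done.
- by rewrite IH.
- by rewrite IH1 IH2.
- have E : forall a, sat (upd e (s x) a) (ren s q) <-> sat (upd (fun v => e (s v)) x a) q.
    move=> a; rewrite IH; apply: sat_free => v _; by rewrite /upd (inj_eq si).
  by split=> -[a Ha]; exists a; apply/E.
Qed.

Lemma free_ren (s : nat -> nat) (p : formula L) v :
  free_in v (ren s p) -> exists u, v = s u /\ free_in u p.
Proof.
elim: p v => [t1 t2|r ts|q IH|q1 IH1 q2 IH2|x q IH] v /=.
- by case=> /occurs_tren [u [-> h]]; exists u; split=> //; [left|right].
- by case=> i /occurs_tren [u [-> h]]; exists u; split=> //; exists i.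
- exact: IH.
- case=> [/IH1 [u [-> h]]|/IH2 [u [-> h]]]; exists u; split=> //; [left|right]; done.
- case=> hx /IH [u [hv h]]; exists u; split=> //; split=> // hu; apply: hx; by rewrite hv hu.
Qed.

Fixpoint fexs (vs : seq nat) (p : formula L) : formula L :=
  match vs with [::] => p | v :: vs' => fex v (fexs vs' p) end.

Lemma sat_fexs vs p : forall e : nat -> M,
  sat e (fexs vs p) <-> exists f : nat -> M, sat (fun v => if v \in vs then f v else e v) p.
Proof.
elim: vs => [|v vs IH] e /=.
  split; [by exists e| by case=> f]. 
split.
- case=> a /IH [f Hf]; exists (fun u => if u \in vs then f u else a).
  apply: (sat_ext _ Hf) => u; rewrite /upd in_cons.
  case: (u \in vs); rewrite ?orbT //; case: eqP => //.
- case=> g Hg; exists (g v); apply/IH; exists g; apply: (sat_ext _ Hg) => u.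
  rewrite /upd in_cons; case: (u \in vs); rewrite ?orbT //; case: eqP => // -> /=.
  by [] || by rewrite eqxx.
Qed.

Lemma free_fexs vs p v : free_in v (fexs vs p) -> v \notin vs /\ free_in v p.
Proof.
elim: vs => [|w vs IH] //= [hw /IH [h1 h2]]; split=> //.
by rewrite in_cons negb_or h1 andbT; apply/eqP.
Qed.

Definition ftrue : formula L := fneg (fex 0 (fneg (fequal (tvar L 0) (tvar L 0)))).

Fixpoint bigand (n : nat) (g : nat -> formula L) : formula L :=
  match n with 0 => ftrue | n'.+1 => fand (g n') (bigand n' g) end.

Lemma sat_bigand n g (e : nat -> M) :
  sat e (bigand n g) <-> forall i, i < n -> sat e (g i).
Proof.
elim: n => [|n IH] /=.
  by split=> // _ [a]; apply.
rewrite IH; split.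
- case=> h1 h2 i; rewrite ltnS leq_eqVlt; case/orP => [/eqP->//|]; exact: h2.
- by move=> h; split=> [|i hi]; apply: h => //; apply: ltnW.
Qed.

Lemma free_bigand n g v : free_in v (bigand n g) -> exists2 i, i < n & free_in v (g i).
Proof.
elim: n => [|n IH] /=; first by case=> h [] /= hv; case: h.
case=> [h|/IH [i hi h]]; [exists n| exists i] => //; exact: ltnW.
Qed.

End Syn.

Local Open Scope R_scope.

Lemma INR_addn m n : INR (m + n)%N = (INR m + INR n).
Proof. exact: plus_INR. Qed.
Lemma INR_muln m n : INR (m * n)%N = (INR m * INR n).
Proof. exact: mult_INR. Qed.

Definition Rleb (x y : R) : bool := if Rle_dec x y then true else false.
Lemma RlebP x y : Rleb x y <-> (x <= y).
Proof. rewrite /Rleb; case: Rle_dec => //. Qed.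

Section Comb.
Variables (I J : finType) (F : I -> J -> bool).

Definition eF (A : {set I}) (B : {set J}) : nat := (\sum_(a in A) \sum_(b in B) (F a b : nat))%N.
Definition dF (A : {set I}) (B : {set J}) : R := (INR (eF A B) / (INR #|A| * INR #|B|)).
Definition degF (B : {set J}) (a : I) : nat := (\sum_(b in B) (F a b : nat))%N.

Lemma sum_bound (S : {set I}) (f : I -> nat) (y : R) :
  (forall a, a \in S -> (INR (f a) <= y)) ->
  (INR (\sum_(a in S) f a)%N <= y * INR #|S|).
Proof.
move=> H; rewrite -sum1_card.
apply: (big_ind2 (fun x n => (INR x <= y * INR n))).
- rewrite /=; lra.
- move=> x1 x2 y1 y2 h1 h2; rewrite !INR_addn; lra.
- move=> a aS; rewrite /= Rmult_1_r; exact: H.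
Qed.

Lemma dF_low (S : {set I}) (B : {set J}) c :
  (0 < #|S|)%N -> (0 < #|B|)%N ->
  (forall a, a \in S -> (INR (degF B a) <= c * INR #|B|)) -> (dF S B <= c).
Proof.
move=> hS hB H; rewrite /dF.
have hS' : (0 < INR #|S|) by apply: lt_0_INR; apply/ltP.
have hB' : (0 < INR #|B|) by apply: lt_0_INR; apply/ltP.
have := sum_bound H => h.
have hp : 0 < INR #|S| * INR #|B| by apply: Rmult_lt_0_compat.
apply: (Rmult_le_reg_r _ _ _ hp).
rewrite /Rdiv Rmult_assoc Rinv_l; last by apply: Rgt_not_eq.
rewrite Rmult_1_r.
rewrite /eF /degF in h *; nra.
Qed.

Lemma sum_card (A : {set J}) (P : J -> bool) :
  (\sum_(b in A) (P b : nat) = #|[set b in A | P b]|)%N.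
Proof.
rewrite -sum1_card big_mkcond [RHS]big_mkcond; apply: eq_bigr => b _.
by rewrite !inE; case: (b \in A); case: (P b).
Qed.

End Comb.

Definition tc (I J : finType) (F : I -> J -> bool) : J -> I -> bool := fun b a => ~~ F a b.

Lemma eF_tc (I J : finType) (F : I -> J -> bool) (A : {set I}) (B : {set J}) :
  (eF (tc F) B A + eF F A B = #|A| * #|B|)%N.
Proof.
rewrite /eF /tc exchange_big /= -big_split /= -sum_nat_const; apply: eq_bigr => a _.
rewrite -big_split /= -sum1_card; apply: eq_bigr => b _; by case: (F a b).
Qed.

Lemma dF_tc (I J : finType) (F : I -> J -> bool) (A : {set I}) (B : {set J}) :
  (0 < #|A|)%N -> (0 < #|B|)%N -> dF (tc F) B A = (1 - dF F A B).
Proof.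
move=> hA hB.
have hS' : (0 < INR #|A|) by apply: lt_0_INR; apply/ltP.
have hB' : (0 < INR #|B|) by apply: lt_0_INR; apply/ltP.
have E := f_equal INR (eF_tc F A B); rewrite INR_addn INR_muln in E.
rewrite /dF; field_simplify; [|lra|lra].
have -> : INR (eF (tc F) B A) = (INR #|A| * INR #|B| - INR (eF F A B)) by lra.
field; lra.
Qed.

Section Step.
Variables (I J : finType) (F : I -> J -> bool) (r c : R).
Hypothesis hr : 0 < r.
Hypothesis hc : 0 < c.
Hypothesis hc1 : c <= 1.
Hypothesis HF : forall (A : {set I}) (B : {set J}), r <= INR #|A| -> r <= INR #|B| -> c < dF F A B.
Hypothesis HG : forall (A : {set I}) (B : {set J}), r <= INR #|A| -> r <= INR #|B| -> c < dF (tc F) B A.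

Lemma pos_card (T : finType) (S : {set T}) : r <= INR #|S| -> (0 < #|S|)%N.
Proof. move=> h; have h0 : INR 0 < INR #|S| by rewrite /=; lra. apply/ltP; exact: INR_lt h0. Qed.

Lemma sub_sep (T : finType) (A : {set T}) P : [set x in A | P x] \subset A.
Proof. by apply/subsetP => x; rewrite inE => /andP[]. Qed.

Lemma big_part (T : finType) (A : {set T}) P :
  INR #|A| = INR #|[set x in A | P x]| + INR #|A :\: [set x in A | P x]|.
Proof.
rewrite -INR_addn -(cardsID [set x in A | P x] A).
by rewrite (setIidPr (sub_sep A P)).
Qed.

Lemma step (A : {set I}) (B : {set J}) : 2 * r <= INR #|A| -> 2 * r <= INR #|B| ->
  exists a b, [/\ a \in A, b \in B, ~~ F a b,
    c * INR #|A| <= INR #|[set a' in A | ~~ F a' b]| &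
    c * INR #|B| <= INR #|[set b' in B | F a b']|].
Proof.
move=> hA hB.
pose Ag := [set a in A | Rleb (c * INR #|B|) (INR (degF F B a))].
have hAg : r < INR #|Ag|.
  have hL : INR #|A :\: Ag| < r.
    apply: Rnot_le_lt => hL.
    have := HF hL (ltac:(lra) : r <= INR #|B|).
    have : dF F (A :\: Ag) B <= c.
      apply: dF_low; [exact: pos_card| apply: pos_card; lra|].
      move=> a; rewrite !inE negb_and => /andP [/orP [h|h] hA']; first by rewrite hA' in h.
      move: h; rewrite /Rleb; case: Rle_dec => // /Rnot_le_lt h _; lra.
    lra.
  have := big_part A (fun a => Rleb (c * INR #|B|) (INR (degF F B a))); rewrite -/Ag; lra.
pose Bg := [set b in B | Rleb (c * INR #|A|) (INR (degF (tc F) A b))].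
have hBg : r < INR #|Bg|.
  have hL : INR #|B :\: Bg| < r.
    apply: Rnot_le_lt => hL.
    have := HG (ltac:(lra) : r <= INR #|A|) hL.
    have : dF (tc F) (B :\: Bg) A <= c.
      apply: dF_low; [exact: pos_card| apply: pos_card; lra|].
      move=> a; rewrite !inE negb_and => /andP [/orP [h|h] hA']; first by rewrite hA' in h.
      move: h; rewrite /Rleb; case: Rle_dec => // /Rnot_le_lt h _; lra.
    lra.
  have := big_part B (fun b => Rleb (c * INR #|A|) (INR (degF (tc F) A b))); rewrite -/Bg; lra.
have hd := HG (Rlt_le _ _ hAg) (Rlt_le _ _ hBg).
have : [exists b in Bg, exists a in Ag, tc F b a].
  case E: [exists b in Bg, exists a in Ag, tc F b a] => //.
  move/negbT/existsPn: E => hn.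
  have e0 : eF (tc F) Bg Ag = 0%N.
    rewrite /eF big1 // => b hb; rewrite big1 // => a ha.
    move: (hn b); rewrite hb /= => /existsPn /(_ a); rewrite ha /=.
    by case: (tc F b a).
  move: hd; rewrite /dF e0 /= /Rdiv Rmult_0_l; lra.
case/existsP => b /andP [hb /existsP [a /andP [ha hab]]].
move: ha hb; rewrite !inE => /andP [ha1 ha2] /andP [hb1 hb2].
exists a, b; split=> //.
- rewrite -sum_card; move/RlebP: hb2; by rewrite /degF /tc.
- rewrite -sum_card; move/RlebP: ha2; by rewrite /degF.
Qed.

Lemma iter_hg (i0 : I) (j0 : J) s : forall (A : {set I}) (B : {set J}),
  2 * r <= c ^ s * INR #|A| -> 2 * r <= c ^ s * INR #|B| ->
  exists (a : nat -> I) (b : nat -> J),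
    (forall i, (i < s)%N -> a i \in A) /\ (forall j, (j < s)%N -> b j \in B) /\
    (forall i j, (i < s)%N -> (j < s)%N -> F (a i) (b j) = (i < j)%N).
Proof.
elim: s => [|s IH] A B hA hB.
  by exists (fun _ => i0), (fun _ => j0).
have hcs : 0 < c ^ s by apply: pow_lt.
have hcs1 : c ^ s <= 1.
  rewrite -(pow1 s); apply: pow_incr; lra.
have hc1s : c ^ s.+1 = c * c ^ s by [].
rewrite hc1s in hA hB.
have hcc : c * c ^ s <= 1 by nra.
have hA2 : 2 * r <= INR #|A|.
  have := Rmult_le_compat_r _ _ _ (pos_INR #|A|) hcc. lra.
have hB2 : 2 * r <= INR #|B|.
  have := Rmult_le_compat_r _ _ _ (pos_INR #|B|) hcc. lra.
have [a0 [b0 [ha0 hb0 hab0 hA' hB']]] := step hA2 hB2.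
have h1 := Rmult_le_compat_l (c ^ s) _ _ (Rlt_le _ _ hcs) hA'.
have h2 := Rmult_le_compat_l (c ^ s) _ _ (Rlt_le _ _ hcs) hB'.
have [a [b [ha [hb hab]]]] := IH [set a' in A | ~~ F a' b0] [set b' in B | F a0 b'] 
  ltac:(lra) ltac:(lra).
exists (fun i => if i is i'.+1 then a i' else a0), (fun j => if j is j'.+1 then b j' else b0).
split; [|split].
- case=> // i hi; have := ha i hi; rewrite inE => /andP [] //.
- case=> // j hj; have := hb j hj; rewrite inE => /andP [] //.
- case=> [|i] [|j] hi hj /=.
  + by apply/negbTE.
  + by have := hb j hj; rewrite inE => /andP [].
  + by have := ha i hi; rewrite inE => /andP [_ /negPf].
  + by rewrite hab.
Qed.
End Step.

Section Main.
Variables (L : signature) (M : structure L) (phi : formula L) (k l : nat).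

Definition w := (k + l)%N.
Definition Aseq (d : nat -> M) (i : nat) : seq M := mkseq (fun r => d (i * w + r)%N) k.
Definition Bseq (d : nat -> M) (j : nat) : seq M := mkseq (fun r => d (j * w + k + r)%N) l.
Definition HG (K : nat) (d : nat -> M) : Prop :=
  forall i j, (i < K)%N -> (j < K)%N -> (@Rrel L M phi (Aseq d i) (Bseq d j) <-> (i < j)%N).

Lemma RbP (a b : seq M) : Rb phi a b <-> Rrel phi a b.
Proof. rewrite /Rb; case: ClassicalDescription.excluded_middle_informative => //=. Qed.

Lemma edges_eF m (X Y : 'I_m -> seq M) A B :
  edges phi X Y A B = eF (fun i j => Rb phi (X i) (Y j)) A B.
Proof.
rewrite /edges /eF -sum1_card big_mkcond /= pair_big_dep /= big_mkcond /=.
rewrite [RHS]big_mkcond /=; apply: eq_bigr => -[i j] _ /=; rewrite !inE /=.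
by case: (i \in A); case: (j \in B); case: (Rb phi (X i) (Y j)).
Qed.

Lemma part1 :
  (exists delta : R, 0 < delta /\ delta < 1 /\
     forall eps : R, 0 < eps /\ eps < 1 -> forall n : nat,
       exists (m : nat) (X Y : 'I_m -> seq M),
         (n <= m)%N /\ bipartite_Rgraph k l X Y /\
         eps_regular phi eps X Y /\
         Rabs (density phi X Y setT setT - delta) < eps) ->
  forall K, exists d, HG K d.
Proof.
case=> delta [hd0 [hd1 H]] K.
pose c := Rmin delta (1 - delta) / 4.
have hc0 : 0 < c by rewrite /c; apply: Rmult_lt_0_compat; [apply: Rmin_glb_lt|]; lra.
have hcd : c <= delta / 4 by rewrite /c; have := Rmin_l delta (1 - delta); lra.
have hcd' : c <= (1 - delta) / 4 by rewrite /c; have := Rmin_r delta (1 - delta); lra.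
pose P := c ^ K.
have hP0 : 0 < P by apply: pow_lt.
have hP1 : P <= 1 by rewrite /P -(pow1 K); apply: pow_incr; lra.
pose eps := P * c / 3.
have he0 : 0 < eps by rewrite /eps; nra.
have he1 : eps <= c / 3 by rewrite /eps; nra.
have he2 : eps < 1 by lra.
have [m [X [Y [hm [hbip [hreg hdens]]]]]] := H eps (conj he0 he2) 1%N.
pose F := fun (i : 'I_m) (j : 'I_m) => Rb phi (X i) (Y j).
have dens_eq : forall A B, density phi X Y A B = dF F A B.
  by move=> A B; rewrite /density edges_eF.
have hm' : 1 <= INR m by apply: (le_INR 1); apply/leP.
pose r := eps * INR m.
have hr : 0 < r by rewrite /r; apply: Rmult_lt_0_compat; lra.
have HF : forall (A B : {set 'I_m}), r <= INR #|A| -> r <= INR #|B| ->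
    delta - 2 * eps < dF F A B < delta + 2 * eps.
  move=> A B hA hB.
  have := hreg A B hA hB; rewrite !dens_eq => /Rabs_def2 [h1 h2].
  move: hdens; rewrite dens_eq => /Rabs_def2 [h3 h4]; lra.
have HF' : forall (A B : {set 'I_m}), r <= INR #|A| -> r <= INR #|B| -> c < dF F A B.
  by move=> A B hA hB; have := HF A B hA hB; lra.
have HG' : forall (A B : {set 'I_m}), r <= INR #|A| -> r <= INR #|B| -> c < dF (tc F) B A.
  move=> A B hA hB; rewrite dF_tc; first (have := HF A B hA hB; lra).
  exact: (pos_card hr hA). exact: (pos_card hr hB).
have m0 : (0 < m)%N by [].
have h2r : 2 * r <= P * INR m.
  rewrite /r /eps.
  have hPm : 0 <= P * INR m by nra.
  have := Rmult_le_compat_l (P * INR m) (2 * c / 3) 1 hPm ltac:(lra). lra.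
have [a [b [_ [_ hab]]]] := iter_hg hr hc0 ltac:(lra) HF' HG' (Ordinal m0) (Ordinal m0)
  (s := K) (A := setT) (B := setT) ltac:(rewrite cardsT card_ord; exact h2r)
  ltac:(rewrite cardsT card_ord; exact h2r).
pose d := fun p => let i := (p %/ w)%N in let q := (p %% w)%N in
  if (q < k)%N then nth (point M) (X (a i)) q else nth (point M) (Y (b i)) (q - k).
exists d => i j hi hj.
have [hX [hY _]] := hbip.
have -> : Aseq d i = X (a i).
  rewrite /Aseq -[in RHS](mkseq_nth (point M) (X (a i))) hX /mkseq.
  apply/eq_in_map => q; rewrite mem_iota => /andP [_ hq].
  have hw : (q < w)%N by rewrite /w ltn_addr.
  have hw0 : (0 < w)%N by apply: leq_ltn_trans hw.
  rewrite /d divnMDl // divn_small // addn0 modnMDl modn_small // hq //.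
have -> : Bseq d j = Y (b j).
  rewrite /Bseq -[in RHS](mkseq_nth (point M) (Y (b j))) hY /mkseq.
  apply/eq_in_map => q; rewrite mem_iota => /andP [_ hq].
  have hw : (k + q < w)%N by rewrite /w ltn_add2l.
  have hw0 : (0 < w)%N by apply: leq_ltn_trans hw.
  rewrite /d -addnA divnMDl // divn_small // addn0 modnMDl modn_small //.
  by rewrite ltnNge leq_addr /= addKn.
rewrite -RbP -/(F (a i) (b j)) hab //.
Qed.
End Main.

Section Part2.
Variables (L : signature) (M : structure L) (phi : formula L) (k l : nat).
Hypothesis hfv : fv_bounded phi k l.
Local Open Scope nat_scope.

Notation w := (w k l).
Definition pos (i j v : nat) := if v < k then i * w + v else j * w + v.
Definition var (t p : nat) := if p < t then p.+1 else if p == t then 0 else p.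
Definition sig (t i j v : nat) :=
  if v < w then var t (pos i j v) else v + (i * w + j * w + w + t).+1.
Definition lit (t i j : nat) : formula L :=
  if i < j then ren (sig t i j) phi else fneg (ren (sig t i j) phi).
Definition psi (t K : nat) : formula L :=
  fexs (iota t.+1 (K * w)) (bigand K (fun i => bigand K (fun j => lit t i j))).

Lemma pos_mod i j v : v < w -> pos i j v %% w = v.
Proof. by move=> hv; rewrite /pos; case: ifP => _; rewrite modnMDl modn_small. Qed.

Lemma pos_le i j v : pos i j v <= i * w + j * w + v.
Proof. rewrite /pos; case: ifP => _; lia. Qed.

Lemma pos_lt K i j v : i < K -> j < K -> v < w -> pos i j v < K * w.
Proof.
move=> hi hj hv; rewrite /pos; case: ifP => _.
- have : i.+1 * w <= K * w by rewrite leq_mul2r hi orbT.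
  rewrite mulSn; lia.
- have : j.+1 * w <= K * w by rewrite leq_mul2r hj orbT.
  rewrite mulSn; lia.
Qed.

Lemma var_inj t : injective (var t).
Proof.
move=> p1 p2; rewrite /var.
case: (ltnP p1 t); case: (ltnP p2 t); case: (p1 =P t); case: (p2 =P t); lia.
Qed.

Lemma sig_inj t i j : injective (sig t i j).
Proof.
move=> v1 v2; rewrite /sig.
have h1 := pos_le i j v1; have h2 := pos_le i j v2.
have hv : forall p, var t p <= p.+1 by move=> p; rewrite /var; case: ifP => _ //; case: ifP => _ //.
have := hv (pos i j v1); have := hv (pos i j v2).
case: (ltnP v1 w) => hv1; case: (ltnP v2 w) => hv2; try lia.
move=> _ _ /var_inj e.
by rewrite -(pos_mod i j hv1) -(pos_mod i j hv2) e.
Qed.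

Lemma Rrel_pos (d : nat -> M) i j :
  Rrel phi (Aseq k l d i) (Bseq k l d j) <-> sat (fun v => d (pos i j v)) phi.
Proof.
apply: sat_free => v /hfv hv.
rewrite nth_cat /Aseq /Bseq size_mkseq /pos.
case: ifP => hk.
- by rewrite nth_mkseq.
- rewrite nth_mkseq; last by move: hv hk; lia.
  by rewrite -addnA subnKC // leqNgt hk.
Qed.

Lemma sat_big (E : nat -> M) t K :
  sat E (bigand K (fun i => bigand K (fun j => lit t i j))) <->
  forall i j, i < K -> j < K -> (sat E (ren (sig t i j) phi) <-> i < j).
Proof.
rewrite sat_bigand; split.
- move=> H i j hi hj; move: (H i hi); rewrite sat_bigand => /(_ j hj).
  rewrite /lit; case: ifP => h /=; split=> //.
- move=> H i hi; rewrite sat_bigand => j hj; have := H i j hi hj.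
  rewrite /lit; case: ifP => h /= [h1 h2]; [exact: h2| by move/h1].
Qed.

Lemma sat_psi (E : nat -> M) t K :
  sat E (psi t K) <->
  exists d : nat -> M, (forall p, p < t -> d p = E p.+1) /\ d t = E 0 /\ HG phi k l K d.
Proof.
rewrite /psi sat_fexs; split.
- case=> f Hf0.
  pose E' := (fun v => if v \in iota t.+1 (K * w) then f v else E v).
  have Hf := proj1 (sat_big E' t K) Hf0.
  exists (fun p => E' (var t p)); split; [|split].
  + move=> p hp /=; rewrite /E' /var hp mem_iota.
    have -> : (t < p.+1) = false by apply/negbTE; rewrite -leqNgt.
    done.
  + rewrite /= /E' /var ltnn eqxx mem_iota ltn0 //.
  + move=> i j hi hj; rewrite Rrel_pos -(Hf i j hi hj) sat_ren; last exact: sig_inj.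
    apply: sat_free => v /hfv hv; by rewrite /sig hv.
- case=> d [hd1 [hd2 hd3]]; exists d; apply/sat_big => i j hi hj.
  rewrite -(hd3 i j hi hj) Rrel_pos sat_ren; last exact: sig_inj.
  apply: sat_free => v /hfv hv; rewrite /sig hv.
  have := pos_lt hi hj hv; set p := pos i j v => hp.
  rewrite /var mem_iota; case: (ltnP p t) => h1.
  + rewrite (hd1 p h1).
    have -> : (t < p.+1) = false by apply/negbTE; rewrite -leqNgt.
    done.
  + case: (p =P t) => h2.
    * by rewrite h2 hd2 ltn0.
    * have -> : (t < p < t.+1 + K * w) = true by apply/andP; split; lia.
      done.
Qed.

Lemma free_psi t K v : free_in v (psi t K) -> v <= t.
Proof.
case/free_fexs; rewrite mem_iota => hv.
case/free_bigand => i hi; case/free_bigand => j hj.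
rewrite /lit; case: ifP => _ /= /free_ren [u [hvu /hfv hu]];
  move: hv; rewrite hvu /sig hu; have := pos_lt hi hj hu; set p := pos i j u => hp;
  rewrite /var; case: (ltnP p t) => h1; try lia; case: (p =P t) => h2; lia.
Qed.

End Part2.

Section Part3.
Variables (L : signature) (M : structure L) (phi : formula L) (k l : nat).
Hypothesis hfv : fv_bounded phi k l.
Hypothesis hsat : omega_saturated M.
Local Open Scope nat_scope.
Notation w := (w k l).

Definition Inv t (c : nat -> M) := forall K, exists d : nat -> M,
  (forall p, p < t -> d p = c p) /\ HG phi k l K d.
Definition ext t (c : nat -> M) (a : M) := fun p => if p == t then a else c p.

Lemma HG_mono K K' (d : nat -> M) : K <= K' -> HG phi k l K' d -> HG phi k l K d.
Proof. move=> hK H i j hi hj; apply: H; exact: leq_trans hK. Qed.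

Lemma step_sat t c : Inv t c -> exists a, Inv t.+1 (ext t c a).
Proof.
move=> hI.
pose params := fun v => c v.-1.
pose P := fun ps => exists K, ps = psi phi k l t K.
have H1 : forall ps, P ps -> forall v, free_in v ps -> v <= t.
  by move=> ps [K ->] v /(free_psi hfv).
have H2 : forall ls : seq (formula L), (forall ps, List.In ps ls -> P ps) ->
    exists a : M, forall ps, List.In ps ls -> sat (upd params 0 a) ps.
  move=> ls hls.
  have [Kb hKb] : exists Kb, forall ps, List.In ps ls -> exists2 K, K <= Kb & ps = psi phi k l t K.
    elim: ls hls => [|ps ls IH] hls; first by exists 0.
    have [Kb hKb] := IH (fun q hq => hls q (or_intror hq)).
    have [K0 eK0] := hls ps (or_introl erefl).
    exists (maxn K0 Kb) => q [<-|hq]; first by exists K0; rewrite ?leq_maxl.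
    case: (hKb q hq) => K hK ->; exists K => //; apply: leq_trans hK (leq_maxr _ _).
  have [d [hd1 hd2]] := hI Kb.
  exists (d t) => ps hps; have [K hK ->] := hKb ps hps.
  apply/(sat_psi hfv); exists d; split; [|split].
  + by move=> p hp; rewrite /upd /= /params /= hd1.
  + by rewrite /upd.
  + exact: HG_mono hK hd2.
have [a Ha] := @hsat t params P H1 H2.
- exists a => K; have := Ha _ (ex_intro _ K erefl); case/(sat_psi hfv) => d [h1 [h2 h3]].
  exists d; split => // p hp; rewrite /ext; case: eqP => [->|ne].
  + by rewrite h2 /upd.
  + rewrite h1; first by rewrite /upd /= /params.
    by move: hp ne; rewrite ltnS leq_eqVlt => /orP [/eqP|].
Qed.

Fixpoint seqc (t : nat) : nat -> M :=
  match t with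
  | 0 => fun _ => point M
  | t'.+1 => ext t' (seqc t')
      (epsilon (inhabits (point M)) (fun a => Inv t'.+1 (ext t' (seqc t') a)))
  end.

Lemma seqc_inv : Inv 0 (fun _ => point M) -> forall t, Inv t (seqc t).
Proof.
move=> h0; elim=> [|t IH] //=.
exact: (epsilon_spec (inhabits (point M)) _ (step_sat IH)).
Qed.

Lemma seqc_stable t p : p < t -> seqc t p = seqc p.+1 p.
Proof.
elim: t => [|t IH] //; rewrite ltnS leq_eqVlt => /orP [/eqP ->//|hp] /=.
by rewrite {1}/ext (ltn_eqF hp) IH.
Qed.

End Part3.

Theorem mainTheorem4 (L : signature) (T : theory L) (M : structure L)
  (phi : formula L) (k l : nat) :
  complete_theory T -> models M T -> omega_saturated M ->
  fv_bounded phi k l ->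
  (exists delta : R, Rlt 0 delta /\ Rlt delta 1 /\
     forall eps : R, Rlt 0 eps /\ Rlt eps 1 -> forall n : nat,
       exists (m : nat) (X Y : 'I_m -> seq M),
         (n <= m)%N /\ bipartite_Rgraph k l X Y /\
         eps_regular phi eps X Y /\
         Rlt (Rabs (Rminus (density phi X Y setT setT) delta)) eps) ->
  order_property M phi k l.
Proof.
move=> _ _ hsat hfv hyp.
have h1 := part1 hyp.
have h0 : Inv phi k l 0 (fun _ => point M).
  by move=> K; have [d hd] := h1 K; exists d.
pose g := fun p => @seqc L M phi k l p.+1 p.
exists (Aseq k l g), (Bseq k l g); split; [|split].
- by move=> i; rewrite size_mkseq.
- by move=> j; rewrite size_mkseq.
move=> i j.
pose K := (maxn i j).+1.
have hi : (i < K)%N by rewrite ltnS leq_maxl.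
have hj : (j < K)%N by rewrite ltnS leq_maxr.
have [d [hd hHG]] := seqc_inv hfv hsat h0 (K * w k l) K.
have hdg : forall p, (p < K * w k l)%N -> d p = g p.
  by move=> p hp; rewrite hd // /g seqc_stable.
have -> : Aseq k l g i = Aseq k l d i.
  rewrite /Aseq /mkseq; apply/eq_in_map => q; rewrite mem_iota => /andP [_ hq].
  rewrite hdg //.
  have : (i.+1 * w k l <= K * w k l)%N by rewrite leq_mul2r hi orbT.
  rewrite mulSn /w; lia.
have -> : Bseq k l g j = Bseq k l d j.
  rewrite /Bseq /mkseq; apply/eq_in_map => q; rewrite mem_iota => /andP [_ hq].
  rewrite hdg //.
  have : (j.+1 * w k l <= K * w k l)%N by rewrite leq_mul2r hj orbT.
  rewrite mulSn /w; lia.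
exact: hHG.
Qed.
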